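(* Let $n\ge 0$ and let $\Lambda,V\subset\mathbb C$ be domains such that $E^n\colon\Lambda\to V$ is a conformal isomorphism. Suppose there is $\xi>1$ with $\Re z>\xi$ for all $z\in V$, that $|(E^n)'(\kappa)|>2$ for all $\kappa\in\Lambda$, and that $V$ is convex and contained in a horizontal strip of height $\pi/2$. Then $E^{n+1}\colon\Lambda\to E^{n+1}(\Lambda)$ is a conformal isomorphism with \[|(E^{n+1})'(\kappa)|>e^\xi|(E^n)'(\kappa)|-1>2|(E^n)'(\kappa)|\] for all $\kappa\in\Lambda$, and $E^{n,n+1}\colon V\to E^{n+1}(\Lambda)$ is a conformal isomorphism with $|(E^{n,n+1})'(z)|>e^\xi-1$ for all $z\in V$.
   Context: For $\kappa\in\mathbb C$ let $E_\kappa(z)=e^z+\kappa$ and $E^n(\kappa):=E_\kappa^{\circ n}(\kappa)$, an entire function of $\kappa$; $(E^n)'$ denotes its derivative with respect to $\kappa$. If $E^n\colon\Lambda\to V$ is a conformal isomorphism, then for $k\ge0$ one defines the holomorphic map $E^{n,n+k}:=E^{n+k}\circ(E^n)^{-1}\colon V\to\mathbb C$; in particular $E^{n,n+1}(z)=e^z+\kappa$ where $\kappa=(E^n)^{-1}(z)$. *)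

(* Defs.v *)
From Stdlib Require Import Reals.
Open Scope R_scope.

Definition Cplx : Type := (R * R)%type.
Definition Re (z : Cplx) : R := fst z.
Definition Im (z : Cplx) : R := snd z.
Definition Cadd (z w : Cplx) : Cplx := (fst z + fst w, snd z + snd w).
Definition Csub (z w : Cplx) : Cplx := (fst z - fst w, snd z - snd w).
Definition Cmul (z w : Cplx) : Cplx :=
  (fst z * fst w - snd z * snd w, fst z * snd w + snd z * fst w).
Definition Cscal (t : R) (z : Cplx) : Cplx := (t * fst z, t * snd z).
Definition Cnorm (z : Cplx) : R := sqrt (fst z * fst z + snd z * snd z).
Definition Cexp (z : Cplx) : Cplx := (exp (fst z) * cos (snd z), exp (fst z) * sin (snd z)).

Definition E_ (kappa z : Cplx) : Cplx := Cadd (Cexp z) kappa.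

Fixpoint En (n : nat) (kappa : Cplx) : Cplx :=
  match n with
  | O => kappa
  | S m => E_ kappa (En m kappa)
  end.

Definition has_cderiv (f : Cplx -> Cplx) (z d : Cplx) : Prop :=
  forall eps, 0 < eps -> exists delta, 0 < delta /\
    forall h : Cplx, 0 < Cnorm h < delta ->
      Cnorm (Csub (Csub (f (Cadd z h)) (f z)) (Cmul d h)) <= eps * Cnorm h.

Definition cset := Cplx -> Prop.

Definition copen (U : cset) : Prop :=
  forall z, U z -> exists r, 0 < r /\ forall w, Cnorm (Csub w z) < r -> U w.

Definition cconnected (U : cset) : Prop :=
  forall A B : cset, copen A -> copen B ->
    (forall z, U z -> A z \/ B z) ->
    (forall z, U z -> A z -> B z -> False) ->
    (forall z, U z -> A z) \/ (forall z, U z -> B z).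

Definition domain (U : cset) : Prop :=
  (exists z, U z) /\ copen U /\ cconnected U.

Definition holomorphic_on (f : Cplx -> Cplx) (U : cset) : Prop :=
  forall z, U z -> exists d, has_cderiv f z d.

Definition conformal_iso (f : Cplx -> Cplx) (U W : cset) : Prop :=
  holomorphic_on f U /\
  (forall z, U z -> W (f z)) /\
  (forall z1 z2, U z1 -> U z2 -> f z1 = f z2 -> z1 = z2) /\
  (forall w, W w -> exists z, U z /\ f z = w).

Definition image (f : Cplx -> Cplx) (U : cset) : cset := fun w => exists z, U z /\ f z = w.

Definition convex (U : cset) : Prop :=
  forall z w t, U z -> U w -> 0 <= t <= 1 -> U (Cadd z (Cscal t (Csub w z))).

Definition in_horizontal_strip (U : cset) (h : R) : Prop :=
  exists a, forall z, U z -> a <= Im z <= a + h.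

(* Main.v *)
Require Import Defs.
From Stdlib Require Import Reals Lra Psatz ClassicalEpsilon.
Open Scope R_scope.

Ltac cunf := unfold Cadd, Csub, Cmul, Cscal, Re, Im in *.
Ltac ceq := cunf; apply injective_projections; simpl; ring.

Definition Cinv (z : Cplx) : Cplx :=
  (fst z / (fst z * fst z + snd z * snd z), - snd z / (fst z * fst z + snd z * snd z)).
Definition Cone : Cplx := (1, 0).
Definition Czero : Cplx := (0, 0).
Definition Cconj (z : Cplx) : Cplx := (fst z, - snd z).

Lemma Cnorm_nonneg z : 0 <= Cnorm z.
Proof. apply sqrt_pos. Qed.

Lemma Cnorm_sq z : Cnorm z * Cnorm z = fst z * fst z + snd z * snd z.
Proof. unfold Cnorm; apply sqrt_sqrt; nra. Qed.

Lemma Cnorm_le_intro z t : 0 <= t -> fst z * fst z + snd z * snd z <= t * t -> Cnorm z <= t.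
Proof.
  intros Ht H. unfold Cnorm. rewrite <- (sqrt_square t Ht). apply sqrt_le_1_alt. exact H.
Qed.

Lemma Cnorm_fst z : Rabs (fst z) <= Cnorm z.
Proof.
  pose proof (Cnorm_sq z); pose proof (Cnorm_nonneg z).
  apply Rabs_le; split; nra.
Qed.

Lemma Cnorm_snd z : Rabs (snd z) <= Cnorm z.
Proof.
  pose proof (Cnorm_sq z); pose proof (Cnorm_nonneg z).
  apply Rabs_le; split; nra.
Qed.

Lemma Cnorm_le_abs z : Cnorm z <= Rabs (fst z) + Rabs (snd z).
Proof.
  apply Cnorm_le_intro.
  - pose proof (Rabs_pos (fst z)); pose proof (Rabs_pos (snd z)); lra.
  - pose proof (Rabs_pos (fst z)); pose proof (Rabs_pos (snd z)).
    assert (Rabs (fst z) * Rabs (fst z) = fst z * fst z) by (rewrite <- Rabs_mult; apply Rabs_right; nra).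
    assert (Rabs (snd z) * Rabs (snd z) = snd z * snd z) by (rewrite <- Rabs_mult; apply Rabs_right; nra).
    nra.
Qed.

Lemma Cnorm_mul z w : Cnorm (Cmul z w) = Cnorm z * Cnorm w.
Proof.
  unfold Cnorm, Cmul; simpl. rewrite <- sqrt_mult by nra. f_equal. ring.
Qed.

Lemma Cnorm_triangle z w : Cnorm (Cadd z w) <= Cnorm z + Cnorm w.
Proof.
  pose proof (Cnorm_sq z); pose proof (Cnorm_sq w);
  pose proof (Cnorm_nonneg z); pose proof (Cnorm_nonneg w).
  apply Cnorm_le_intro; [lra|]. unfold Cadd; simpl.
  destruct z as [x1 y1]; destruct w as [x2 y2]; simpl in *.
  assert (x1 * x2 + y1 * y2 <= Cnorm (x1, y1) * Cnorm (x2, y2)).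
  { destruct (Rle_or_lt (x1 * x2 + y1 * y2) 0). nra.
    assert ((x1 * x2 + y1 * y2) * (x1 * x2 + y1 * y2) <= (Cnorm (x1, y1) * Cnorm (x2, y2)) * (Cnorm (x1, y1) * Cnorm (x2, y2))).
    { replace ((Cnorm (x1, y1) * Cnorm (x2, y2)) * (Cnorm (x1, y1) * Cnorm (x2, y2))) with
        ((Cnorm (x1, y1) * Cnorm (x1, y1)) * (Cnorm (x2, y2) * Cnorm (x2, y2))) by ring.
      rewrite H, H0. pose proof (Rle_0_sqr (x1 * y2 - x2 * y1)); unfold Rsqr in *; nra. }
    assert (0 <= Cnorm (x1, y1) * Cnorm (x2, y2)) by (apply Rmult_le_pos; auto). nra. }
  nra.
Qed.

Lemma Cnorm_scal t z : Cnorm (Cscal t z) = Rabs t * Cnorm z.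
Proof.
  unfold Cnorm, Cscal; simpl. rewrite <- sqrt_Rsqr_abs, <- sqrt_mult by (unfold Rsqr; nra).
  f_equal. unfold Rsqr; ring.
Qed.

Lemma Cnorm_sub_sym z w : Cnorm (Csub z w) = Cnorm (Csub w z).
Proof. unfold Cnorm, Csub; simpl. f_equal. ring. Qed.

Lemma Cnorm_sub_tri a b c : Cnorm (Csub a c) <= Cnorm (Csub a b) + Cnorm (Csub b c).
Proof.
  replace (Csub a c) with (Cadd (Csub a b) (Csub b c)) by ceq. apply Cnorm_triangle.
Qed.

Lemma Cnorm_rev a b : Cnorm a - Cnorm b <= Cnorm (Cadd a b).
Proof.
  pose proof (Cnorm_triangle (Cadd a b) (Cscal (-1) b)).
  replace (Cadd (Cadd a b) (Cscal (-1) b)) with a in H by ceq.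
  rewrite Cnorm_scal in H. rewrite (Rabs_left (-1)) in H by lra. lra.
Qed.

Lemma Cnorm_zero z : Cnorm z = 0 -> z = Czero.
Proof.
  intros H. pose proof (Cnorm_sq z). rewrite H in H0.
  destruct z as [x y]; simpl in *. unfold Czero. f_equal; nra.
Qed.

Lemma Cnorm_C0 : Cnorm Czero = 0.
Proof. unfold Cnorm, Czero; simpl. replace (0*0+0*0) with 0 by ring. apply sqrt_0. Qed.

Lemma Cnorm_C1 : Cnorm Cone = 1.
Proof. unfold Cnorm, Cone; simpl. replace (1*1+0*0) with 1 by ring. apply sqrt_1. Qed.

Lemma Cnorm_pos_neq z : 0 < Cnorm z -> fst z * fst z + snd z * snd z <> 0.
Proof. intros H. rewrite <- Cnorm_sq. nra. Qed.

Lemma Cinv_l z : 0 < Cnorm z -> Cmul (Cinv z) z = Cone.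
Proof.
  intros H. apply Cnorm_pos_neq in H. destruct z as [x y]; simpl in *.
  unfold Cmul, Cinv, Cone; simpl. f_equal; field; auto.
Qed.

Lemma Cnorm_Cinv z : 0 < Cnorm z -> Cnorm (Cinv z) = / Cnorm z.
Proof.
  intros H. pose proof (Cinv_l z H). 
  assert (Cnorm (Cinv z) * Cnorm z = 1) by (rewrite <- Cnorm_mul, H0; apply Cnorm_C1).
  field_simplify_eq; [| lra]. lra.
Qed.

Lemma Cexp_add z h : Cexp (Cadd z h) = Cmul (Cexp z) (Cexp h).
Proof.
  destruct z as [x y], h as [a b]; unfold Cexp, Cadd, Cmul; simpl.
  rewrite exp_plus, cos_plus, sin_plus. f_equal; ring.
Qed.

Lemma Cnorm_Cexp z : Cnorm (Cexp z) = exp (fst z).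
Proof.
  unfold Cnorm, Cexp; simpl.
  replace (exp (fst z) * cos (snd z) * (exp (fst z) * cos (snd z)) +
   exp (fst z) * sin (snd z) * (exp (fst z) * sin (snd z))) with
   (exp (fst z) * exp (fst z) * (Rsqr (sin (snd z)) + Rsqr (cos (snd z)))) by (unfold Rsqr; ring).
  rewrite sin2_cos2, Rmult_1_r. apply sqrt_square. pose proof (exp_pos (fst z)); lra.
Qed.

Lemma Cadd_0 z : Cadd z Czero = z.
Proof. unfold Czero; ceq. Qed.

Lemma hd_le f z d : has_cderiv f z d -> forall eps, 0 < eps -> exists delta, 0 < delta /\
  forall h, Cnorm h < delta ->
    Cnorm (Csub (Csub (f (Cadd z h)) (f z)) (Cmul d h)) <= eps * Cnorm h.
Proof.
  intros H eps Heps. destruct (H eps Heps) as [delta [Hd Hh]]. exists delta; split; auto.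
  intros h Hlt. destruct (Rle_lt_or_eq_dec 0 (Cnorm h) (Cnorm_nonneg h)) as [Hp|Hz].
  - apply Hh; lra.
  - symmetry in Hz. apply Cnorm_zero in Hz. subst h. rewrite Cadd_0.
    replace (Csub (Csub (f z) (f z)) (Cmul d Czero)) with Czero by (unfold Czero; ceq).
    rewrite Cnorm_C0. pose proof (Cnorm_nonneg Czero). nra.
Qed.

Lemma cderiv_ext f g z d : (forall w, f w = g w) -> has_cderiv f z d -> has_cderiv g z d.
Proof.
  intros E H eps Heps. destruct (H eps Heps) as [delta [Hd Hh]]. exists delta; split; auto.
  intros h Hh'. rewrite <- !E. auto.
Qed.

Lemma cderiv_local f g z d r : 0 < r -> (forall w, Cnorm (Csub w z) < r -> f w = g w) ->
  has_cderiv f z d -> has_cderiv g z d.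
Proof.
  intros Hr E H eps Heps. destruct (H eps Heps) as [delta [Hd Hh]]. exists (Rmin delta r); split.
  { apply Rmin_pos; auto. }
  intros h Hh'. 
  assert (Cnorm (Csub (Cadd z h) z) < r).
  { replace (Csub (Cadd z h) z) with h by ceq. pose proof (Rmin_r delta r). lra. }
  assert (Cnorm (Csub z z) < r).
  { replace (Csub z z) with Czero by (unfold Czero; ceq). rewrite Cnorm_C0; lra. }
  rewrite <- (E _ H0), <- (E _ H1). apply Hh. pose proof (Rmin_l delta r). lra.
Qed.

Lemma cderiv_unique f z d1 d2 : has_cderiv f z d1 -> has_cderiv f z d2 -> d1 = d2.
Proof.
  intros H1 H2.
  assert (forall eps, 0 < eps -> Cnorm (Csub d1 d2) <= 2 * eps).
  { intros eps Heps. destruct (H1 eps Heps) as [a [Ha Hha]]. destruct (H2 eps Heps) as [b [Hb Hhb]].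
    set (t := Rmin a b / 2).
    assert (0 < t) by (unfold t; pose proof (Rmin_pos a b Ha Hb); lra).
    assert (t < a) by (unfold t; pose proof (Rmin_l a b); lra).
    assert (t < b) by (unfold t; pose proof (Rmin_r a b); lra).
    set (h := (t, 0) : Cplx).
    assert (Nh : Cnorm h = t).
    { unfold h, Cnorm; simpl. replace (t * t + 0 * 0) with (t * t) by ring. apply sqrt_square; lra. }
    specialize (Hha h). specialize (Hhb h). rewrite Nh in Hha, Hhb.
    assert (E : Cmul (Csub d1 d2) h = Cadd (Csub (Csub (f (Cadd z h)) (f z)) (Cmul d2 h))
        (Cscal (-1) (Csub (Csub (f (Cadd z h)) (f z)) (Cmul d1 h)))) by ceq.
    pose proof (Cnorm_triangle (Csub (Csub (f (Cadd z h)) (f z)) (Cmul d2 h))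
        (Cscal (-1) (Csub (Csub (f (Cadd z h)) (f z)) (Cmul d1 h)))).
    rewrite <- E, Cnorm_mul, Nh, Cnorm_scal, (Rabs_left (-1)) in H4 by lra.
    assert (Cnorm (Csub d1 d2) * t <= 2 * eps * t) by (specialize (Hha ltac:(lra)); specialize (Hhb ltac:(lra)); lra).
    apply Rmult_le_reg_r with t; lra. }
  assert (Cnorm (Csub d1 d2) = 0).
  { pose proof (Cnorm_nonneg (Csub d1 d2)).
    destruct (Rle_lt_or_eq_dec _ _ H0) as [Hp|Hz]; [|lra].
    specialize (H (Cnorm (Csub d1 d2) / 4) ltac:(lra)). lra. }
  apply Cnorm_zero in H0. destruct d1, d2; unfold Csub, Czero in *; simpl in *.
  injection H0; intros; f_equal; lra.
Qed.

Lemma cderiv_id z : has_cderiv (fun w => w) z Cone.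
Proof.
  intros eps Heps. exists 1; split; [lra|]. intros h _.
  replace (Csub (Csub (Cadd z h) z) (Cmul Cone h)) with Czero by (unfold Czero, Cone; ceq).
  rewrite Cnorm_C0. pose proof (Cnorm_nonneg h). nra.
Qed.

Lemma cderiv_const c z : has_cderiv (fun _ => c) z Czero.
Proof.
  intros eps Heps. exists 1; split; [lra|]. intros h _.
  replace (Csub (Csub c c) (Cmul Czero h)) with Czero by (unfold Czero; ceq).
  rewrite Cnorm_C0. pose proof (Cnorm_nonneg h). nra.
Qed.

Lemma cderiv_add f g z a b : has_cderiv f z a -> has_cderiv g z b ->
  has_cderiv (fun w => Cadd (f w) (g w)) z (Cadd a b).
Proof.
  intros Hf Hg eps Heps. destruct (Hf (eps/2) ltac:(lra)) as [d1 [Hd1 H1]].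
  destruct (Hg (eps/2) ltac:(lra)) as [d2 [Hd2 H2]].
  exists (Rmin d1 d2); split; [apply Rmin_pos; auto|]. intros h Hh.
  pose proof (Rmin_l d1 d2); pose proof (Rmin_r d1 d2).
  specialize (H1 h ltac:(lra)); specialize (H2 h ltac:(lra)).
  replace (Csub (Csub (Cadd (f (Cadd z h)) (g (Cadd z h))) (Cadd (f z) (g z))) (Cmul (Cadd a b) h))
    with (Cadd (Csub (Csub (f (Cadd z h)) (f z)) (Cmul a h)) (Csub (Csub (g (Cadd z h)) (g z)) (Cmul b h))) by ceq.
  eapply Rle_trans; [apply Cnorm_triangle|]. lra.
Qed.

Lemma cderiv_sub f g z a b : has_cderiv f z a -> has_cderiv g z b ->
  has_cderiv (fun w => Csub (f w) (g w)) z (Csub a b).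
Proof.
  intros Hf Hg eps Heps. destruct (Hf (eps/2) ltac:(lra)) as [d1 [Hd1 H1]].
  destruct (Hg (eps/2) ltac:(lra)) as [d2 [Hd2 H2]].
  exists (Rmin d1 d2); split; [apply Rmin_pos; auto|]. intros h Hh.
  pose proof (Rmin_l d1 d2); pose proof (Rmin_r d1 d2).
  specialize (H1 h ltac:(lra)); specialize (H2 h ltac:(lra)).
  replace (Csub (Csub (Csub (f (Cadd z h)) (g (Cadd z h))) (Csub (f z) (g z))) (Cmul (Csub a b) h))
    with (Cadd (Csub (Csub (f (Cadd z h)) (f z)) (Cmul a h)) (Cscal (-1) (Csub (Csub (g (Cadd z h)) (g z)) (Cmul b h)))) by ceq.
  eapply Rle_trans; [apply Cnorm_triangle|]. rewrite Cnorm_scal, (Rabs_left (-1)) by lra. lra.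
Qed.

Lemma cderiv_lip f z d : has_cderiv f z d -> exists delta, 0 < delta /\
  forall h, Cnorm h < delta -> Cnorm (Csub (f (Cadd z h)) (f z)) <= (Cnorm d + 1) * Cnorm h.
Proof.
  intros H. destruct (hd_le f z d H 1 ltac:(lra)) as [delta [Hd Hh]]. exists delta; split; auto.
  intros h Hlt. specialize (Hh h Hlt).
  replace (Csub (f (Cadd z h)) (f z)) with (Cadd (Csub (Csub (f (Cadd z h)) (f z)) (Cmul d h)) (Cmul d h)) by ceq.
  eapply Rle_trans; [apply Cnorm_triangle|]. rewrite Cnorm_mul. lra.
Qed.

Lemma cderiv_comp f g z a b : has_cderiv f z a -> has_cderiv g (f z) b ->
  has_cderiv (fun w => g (f w)) z (Cmul b a).
Proof.
  intros Hf Hg eps Heps.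
  destruct (cderiv_lip f z a Hf) as [d0 [Hd0 HL]].
  set (M := Cnorm a + 1). assert (HM : 0 < M) by (unfold M; pose proof (Cnorm_nonneg a); lra).
  destruct (hd_le g (f z) b Hg (eps / (2 * M)) ltac:(apply Rdiv_lt_0_compat; lra)) as [d2 [Hd2 H2]].
  set (Nb := Cnorm b + 1). assert (HNb : 0 < Nb) by (unfold Nb; pose proof (Cnorm_nonneg b); lra).
  destruct (hd_le f z a Hf (eps / (2 * Nb)) ltac:(apply Rdiv_lt_0_compat; lra)) as [d1 [Hd1 H1]].
  exists (Rmin (Rmin d0 d1) (d2 / M)); split.
  { apply Rmin_pos; [apply Rmin_pos|apply Rdiv_lt_0_compat]; auto. }
  intros h Hh. pose proof (Rmin_l (Rmin d0 d1) (d2 / M)); pose proof (Rmin_r (Rmin d0 d1) (d2 / M));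
  pose proof (Rmin_l d0 d1); pose proof (Rmin_r d0 d1).
  pose proof (Cnorm_nonneg h).
  set (k := Csub (f (Cadd z h)) (f z)).
  assert (Hk : Cnorm k <= M * Cnorm h) by (apply HL; lra).
  assert (Hk2 : Cnorm k < d2).
  { assert (Hm : M * Cnorm h < M * (d2 / M)) by (apply Rmult_lt_compat_l; lra).
    replace (M * (d2 / M)) with d2 in Hm by (field; lra). lra. }
  specialize (H2 k Hk2). specialize (H1 h ltac:(lra)).
  replace (Cadd (f z) k) with (f (Cadd z h)) in H2 by (unfold k; ceq).
  replace (Csub (Csub (g (f (Cadd z h))) (g (f z))) (Cmul (Cmul b a) h)) with
    (Cadd (Csub (Csub (g (f (Cadd z h))) (g (f z))) (Cmul b k)) (Cmul b (Csub (Csub (f (Cadd z h)) (f z)) (Cmul a h)))) by (unfold k; ceq).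
  eapply Rle_trans; [apply Cnorm_triangle|]. rewrite Cnorm_mul.
  assert (eps / (2 * M) * Cnorm k <= eps / 2 * Cnorm h).
  { apply Rle_trans with (eps / (2 * M) * (M * Cnorm h)).
    - apply Rmult_le_compat_l; [|auto]. left; apply Rdiv_lt_0_compat; lra.
    - right; field; lra. }
  assert (Cnorm b * Cnorm (Csub (Csub (f (Cadd z h)) (f z)) (Cmul a h)) <= eps / 2 * Cnorm h).
  { apply Rle_trans with (Nb * (eps / (2 * Nb) * Cnorm h)).
    - apply Rmult_le_compat; auto using Cnorm_nonneg. unfold Nb; lra.
    - right; field; lra. }
  lra.
Qed.

Definition ccont (f : Cplx -> Cplx) (z : Cplx) : Prop :=
  forall eps, 0 < eps -> exists delta, 0 < delta /\
    forall w, Cnorm (Csub w z) < delta -> Cnorm (Csub (f w) (f z)) < eps.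

Lemma cderiv_cont f z d : has_cderiv f z d -> ccont f z.
Proof.
  intros H eps Heps. destruct (cderiv_lip f z d H) as [d0 [Hd0 HL]].
  set (M := Cnorm d + 1). assert (HM : 0 < M) by (unfold M; pose proof (Cnorm_nonneg d); lra).
  exists (Rmin d0 (eps / M)); split; [apply Rmin_pos; [auto|apply Rdiv_lt_0_compat; lra]|].
  intros w Hw. pose proof (Rmin_l d0 (eps / M)); pose proof (Rmin_r d0 (eps / M)).
  specialize (HL (Csub w z) ltac:(lra)). replace (Cadd z (Csub w z)) with w in HL by ceq.
  assert (M * Cnorm (Csub w z) < M * (eps / M)) by (apply Rmult_lt_compat_l; lra).
  replace (M * (eps / M)) with eps in H2 by (field; lra). fold M in HL. lra.
Qed.

Lemma ccont_const c z : ccont (fun _ => c) z.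
Proof.
  intros eps Heps. exists 1; split; [lra|]. intros w _.
  replace (Csub c c) with Czero by (unfold Czero; ceq). rewrite Cnorm_C0; lra.
Qed.

Lemma ccont_add f g z : ccont f z -> ccont g z -> ccont (fun w => Cadd (f w) (g w)) z.
Proof.
  intros Hf Hg eps Heps. destruct (Hf (eps/2) ltac:(lra)) as [d1 [Hd1 H1]].
  destruct (Hg (eps/2) ltac:(lra)) as [d2 [Hd2 H2]].
  exists (Rmin d1 d2); split; [apply Rmin_pos; auto|]. intros w Hw.
  pose proof (Rmin_l d1 d2); pose proof (Rmin_r d1 d2).
  specialize (H1 w ltac:(lra)); specialize (H2 w ltac:(lra)).
  replace (Csub (Cadd (f w) (g w)) (Cadd (f z) (g z))) with (Cadd (Csub (f w) (f z)) (Csub (g w) (g z))) by ceq.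
  eapply Rle_lt_trans; [apply Cnorm_triangle|]. lra.
Qed.

Lemma ccont_mul f g z : ccont f z -> ccont g z -> ccont (fun w => Cmul (f w) (g w)) z.
Proof.
  intros Hf Hg eps Heps.
  set (A := Cnorm (f z) + 1). set (B := Cnorm (g z) + 1).
  assert (0 < A) by (unfold A; pose proof (Cnorm_nonneg (f z)); lra).
  assert (0 < B) by (unfold B; pose proof (Cnorm_nonneg (g z)); lra).
  destruct (Hf (Rmin 1 (eps / (2 * B))) ltac:(apply Rmin_pos; [lra|apply Rdiv_lt_0_compat; lra])) as [d1 [Hd1 H1]].
  destruct (Hg (eps / (2 * A)) ltac:(apply Rdiv_lt_0_compat; lra)) as [d2 [Hd2 H2]].
  exists (Rmin d1 d2); split; [apply Rmin_pos; auto|]. intros w Hw.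
  pose proof (Rmin_l d1 d2); pose proof (Rmin_r d1 d2).
  specialize (H1 w ltac:(lra)); specialize (H2 w ltac:(lra)).
  pose proof (Rmin_l 1 (eps / (2 * B))); pose proof (Rmin_r 1 (eps / (2 * B))).
  replace (Csub (Cmul (f w) (g w)) (Cmul (f z) (g z))) with
    (Cadd (Cmul (f w) (Csub (g w) (g z))) (Cmul (Csub (f w) (f z)) (g z))) by ceq.
  eapply Rle_lt_trans; [apply Cnorm_triangle|]. rewrite !Cnorm_mul.
  assert (HA : Cnorm (f w) <= A).
  { pose proof (Cnorm_triangle (f z) (Csub (f w) (f z))) as T. replace (Cadd (f z) (Csub (f w) (f z))) with (f w) in T by ceq.
    unfold A; lra. }
  assert (HB : Cnorm (Csub (f w) (f z)) * Cnorm (g z) <= (eps / (2 * B)) * B).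
  { apply Rmult_le_compat; auto using Cnorm_nonneg; first [lra | unfold B; lra]. }
  replace ((eps / (2 * B)) * B) with (eps / 2) in HB by (field; lra).
  assert (HC : Cnorm (f w) * Cnorm (Csub (g w) (g z)) < A * (eps / (2 * A))).
  { apply Rle_lt_trans with (A * Cnorm (Csub (g w) (g z))).
    apply Rmult_le_compat_r; auto using Cnorm_nonneg. apply Rmult_lt_compat_l; lra. }
  replace (A * (eps / (2 * A))) with (eps / 2) in HC by (field; lra). lra.
Qed.

Lemma ccont_comp f g z : ccont f z -> ccont g (f z) -> ccont (fun w => g (f w)) z.
Proof.
  intros Hf Hg eps Heps. destruct (Hg eps Heps) as [d2 [Hd2 H2]].
  destruct (Hf d2 Hd2) as [d1 [Hd1 H1]]. exists d1; split; auto.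
Qed.

Lemma abs_le_inv x a : Rabs x <= a -> -a <= x <= a.
Proof. unfold Rabs; destruct (Rcase_abs x); lra. Qed.

Lemma mvt_bound (f f' : R -> R) x K : (forall c, derivable_pt_lim f c (f' c)) ->
  (forall c, Rabs c <= Rabs x -> Rabs (f' c) <= K) -> Rabs (f x - f 0) <= K * Rabs x.
Proof.
  intros Hd Hb. destruct (Rtotal_order 0 x) as [Hx|[Hx|Hx]].
  - destruct (MVT_cor2 f f' 0 x Hx (fun c _ => Hd c)) as [c [E Hc]].
    rewrite E, Rminus_0_r, Rabs_mult. apply Rmult_le_compat_r; [apply Rabs_pos|]. apply Hb.
    rewrite !Rabs_right; lra.
  - subst x. replace (f 0 - f 0) with 0 by ring. rewrite Rabs_R0. lra.
  - destruct (MVT_cor2 f f' x 0 Hx (fun c _ => Hd c)) as [c [E Hc]].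
    replace (f x - f 0) with (- (f 0 - f x)) by ring. rewrite Rabs_Ropp, E, Rabs_mult.
    rewrite (Rabs_right (0 - x)) by lra. rewrite (Rabs_left x) by lra.
    replace (- x) with (0 - x) by ring.
    apply Rmult_le_compat_r; [lra|]. apply Hb.
    rewrite (Rabs_left x), Rabs_left1; lra.
Qed.

Lemma sin_abs_le x : Rabs (sin x) <= Rabs x.
Proof.
  pose proof (mvt_bound sin cos x 1 derivable_pt_lim_sin) as H.
  rewrite sin_0, Rminus_0_r, Rmult_1_l in H. apply H.
  intros c _. pose proof (COS_bound c). apply Rabs_le; lra.
Qed.

Lemma cos1_le x : Rabs (cos x - 1) <= x * x.
Proof.
  pose proof (mvt_bound cos (fun c => - sin c) x (Rabs x)) as H.
  rewrite cos_0 in H. replace (x * x) with (Rabs x * Rabs x).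
  2:{ rewrite <- Rabs_mult. apply Rabs_right. nra. }
  apply H. apply derivable_pt_lim_cos.
  intros c Hc. rewrite Rabs_Ropp. eapply Rle_trans; [apply sin_abs_le| exact Hc].
Qed.

Lemma sin_id_le x : Rabs x <= 1 -> Rabs (sin x - x) <= x * x.
Proof.
  intros Hx.
  pose proof (mvt_bound (fun t => sin t - t) (fun c => cos c - 1) x (Rabs x)) as H.
  simpl in H. rewrite sin_0 in H. replace (sin x - x - (0 - 0)) with (sin x - x) in H by ring.
  replace (x * x) with (Rabs x * Rabs x).
  2:{ rewrite <- Rabs_mult. apply Rabs_right. nra. }
  apply H.
  - intros c. apply derivable_pt_lim_minus. apply derivable_pt_lim_sin. apply derivable_pt_lim_id.
  - intros c Hc. eapply Rle_trans; [apply cos1_le|].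
    pose proof (Rabs_pos c). replace (c * c) with (Rabs c * Rabs c). nra.
    rewrite <- Rabs_mult. apply Rabs_right. nra.
Qed.

Lemma exp_le_1 c : Rabs c <= 1 -> exp c <= 3.
Proof.
  intros Hc. pose proof exp_le_3. destruct (Rle_lt_or_eq_dec c 1) as [H1|H1].
  - apply abs_le_inv in Hc; lra.
  - pose proof (exp_increasing _ _ H1); lra.
  - subst; lra.
Qed.

Lemma exp1_le x : Rabs x <= 1 -> Rabs (exp x - 1) <= 3 * Rabs x.
Proof.
  intros Hx. pose proof (mvt_bound exp exp x 3 derivable_pt_lim_exp) as H.
  rewrite exp_0 in H. apply H. intros c Hc. rewrite Rabs_right by (left; apply exp_pos).
  apply exp_le_1; lra.
Qed.

Lemma exp2_le x : Rabs x <= 1 -> Rabs (exp x - 1 - x) <= 3 * (x * x).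
Proof.
  intros Hx.
  pose proof (mvt_bound (fun t => exp t - t) (fun c => exp c - 1) x (3 * Rabs x)) as H.
  simpl in H. rewrite exp_0 in H. replace (exp x - x - (1 - 0)) with (exp x - 1 - x) in H by ring.
  replace (x * x) with (Rabs x * Rabs x).
  2:{ rewrite <- Rabs_mult. apply Rabs_right. nra. }
  rewrite <- Rmult_assoc. apply H.
  - intros c. apply derivable_pt_lim_minus. apply derivable_pt_lim_exp. apply derivable_pt_lim_id.
  - intros c Hc. eapply Rle_trans; [apply exp1_le; lra|]. lra.
Qed.

Lemma Cexp_quad h : Cnorm h <= 1 ->
  Cnorm (Csub (Csub (Cexp h) Cone) h) <= 10 * (Cnorm h * Cnorm h).
Proof.
  intros Hh. destruct h as [a b].
  pose proof (Cnorm_fst (a, b)) as Ha; pose proof (Cnorm_snd (a, b)) as Hb; simpl in Ha, Hb.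
  set (N := Cnorm (a, b)) in *.
  assert (Ha1 : Rabs a <= 1) by lra. assert (Hb1 : Rabs b <= 1) by lra.
  eapply Rle_trans; [apply Cnorm_le_abs|]. unfold Cexp, Csub, Cone; simpl.
  pose proof (exp2_le a Ha1) as E2. pose proof (exp1_le a Ha1) as E1.
  pose proof (cos1_le b) as C1'. pose proof (sin_id_le b Hb1) as S1.
  pose proof (COS_bound b) as CB. pose proof (sin_abs_le b) as SB.
  assert (Ea : a * a = Rabs a * Rabs a) by (rewrite <- Rabs_mult; rewrite Rabs_right; nra).
  assert (Eb : b * b = Rabs b * Rabs b) by (rewrite <- Rabs_mult; rewrite Rabs_right; nra).
  pose proof (Rabs_pos a); pose proof (Rabs_pos b).
  assert (Raa : a * a <= N * N) by nra.
  assert (Rbb : b * b <= N * N) by nra.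
  assert (R1 : Rabs (exp a * cos b - 1 - a) <= 5 * (N * N)).
  { replace (exp a * cos b - 1 - a) with ((exp a - 1 - a) * cos b + (1 + a) * (cos b - 1)) by ring.
    eapply Rle_trans; [apply Rabs_triang|]. rewrite !Rabs_mult.
    assert (Rabs (cos b) <= 1) by (apply Rabs_le; lra).
    assert (Rabs (1 + a) <= 2) by (apply Rabs_le; apply abs_le_inv in Ha1; lra).
    pose proof (Rabs_pos (exp a - 1 - a)); pose proof (Rabs_pos (cos b)); pose proof (Rabs_pos (1+a));
    pose proof (Rabs_pos (cos b - 1)).
    apply Rle_trans with (3 * (a * a) * 1 + 2 * (b * b)); [|nra].
    apply Rplus_le_compat; apply Rmult_le_compat; auto. }
  assert (R2 : Rabs (exp a * sin b - 0 - b) <= 5 * (N * N)).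
  { replace (exp a * sin b - 0 - b) with ((exp a - 1) * sin b + (sin b - b)) by ring.
    eapply Rle_trans; [apply Rabs_triang|]. rewrite !Rabs_mult.
    pose proof (Rabs_pos (exp a - 1)); pose proof (Rabs_pos (sin b)); pose proof (Rabs_pos a);
    pose proof (Rabs_pos b).
    apply Rle_trans with (3 * Rabs a * Rabs b + b * b); [|nra].
    apply Rplus_le_compat; [|auto]. apply Rmult_le_compat; auto. }
  lra.
Qed.

Lemma cderiv_exp z : has_cderiv Cexp z (Cexp z).
Proof.
  intros eps Heps. set (M := 10 * exp (fst z) + 1).
  assert (HM : 0 < M) by (unfold M; pose proof (exp_pos (fst z)); lra).
  exists (Rmin 1 (eps / M)); split; [apply Rmin_pos; [lra|apply Rdiv_lt_0_compat; lra]|].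
  intros h [Hh0 Hh]. pose proof (Rmin_l 1 (eps / M)); pose proof (Rmin_r 1 (eps / M)).
  replace (Csub (Csub (Cexp (Cadd z h)) (Cexp z)) (Cmul (Cexp z) h)) with
    (Cmul (Cexp z) (Csub (Csub (Cexp h) Cone) h)) by (rewrite Cexp_add; unfold Cone; ceq).
  rewrite Cnorm_mul, Cnorm_Cexp. pose proof (Cexp_quad h ltac:(lra)).
  pose proof (exp_pos (fst z)).
  apply Rle_trans with (exp (fst z) * (10 * (Cnorm h * Cnorm h))).
  { apply Rmult_le_compat_l; lra. }
  assert (Cnorm h * M <= eps).
  { apply Rle_trans with ((eps / M) * M). apply Rmult_le_compat_r; lra. right; field; lra. }
  unfold M in H3. nra.
Qed.

Fixpoint Dn (m : nat) (k : Cplx) : Cplx :=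
  match m with
  | O => Cone
  | S p => Cadd (Cmul (Cexp (En p k)) (Dn p k)) Cone
  end.

Lemma En_deriv m k : has_cderiv (En m) k (Dn m k).
Proof.
  induction m.
  - simpl. apply (cderiv_ext (fun w => w)); [reflexivity|apply cderiv_id].
  - simpl. apply (cderiv_ext (fun w => Cadd (Cexp (En m w)) w)); [reflexivity|].
    apply cderiv_add; [|apply cderiv_id].
    apply (cderiv_comp (En m) Cexp); auto. apply cderiv_exp.
Qed.

Lemma Dn_cont m k : ccont (Dn m) k.
Proof.
  induction m.
  - simpl. apply ccont_const.
  - simpl. apply (ccont_add (fun w => Cmul (Cexp (En m w)) (Dn m w)) (fun _ => Cone)); [|apply ccont_const].
    apply (ccont_mul (fun w => Cexp (En m w))); auto.
    apply (cderiv_cont _ _ (Cmul (Cexp (En m k)) (Dn m k))).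
    apply (cderiv_comp (En m) Cexp). apply En_deriv. apply cderiv_exp.
Qed.

Lemma line_deriv f y h c t d :
  has_cderiv f (Cadd y (Cscal t h)) d ->
  derivable_pt_lim (fun s => Re (Cmul c (f (Cadd y (Cscal s h))))) t (Re (Cmul c (Cmul d h))).
Proof.
  intros H eps Heps.
  set (p := Cadd y (Cscal t h)).
  set (M := Cnorm c * Cnorm h + 1).
  assert (HM : 0 < M) by (unfold M; pose proof (Cnorm_nonneg c); pose proof (Cnorm_nonneg h); nra).
  destruct (hd_le f p d H (eps / (2 * M)) ltac:(apply Rdiv_lt_0_compat; lra)) as [del [Hdel Hb]].
  set (del' := del / (Cnorm h + 1)).
  assert (Hdel' : 0 < del') by (unfold del'; pose proof (Cnorm_nonneg h); apply Rdiv_lt_0_compat; lra).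
  exists (mkposreal del' Hdel'). intros s Hs0 Hs. simpl in Hs.
  set (k := Cscal s h).
  assert (Nk : Cnorm k = Rabs s * Cnorm h) by apply Cnorm_scal.
  assert (Hk : Cnorm k < del).
  { rewrite Nk. pose proof (Cnorm_nonneg h). pose proof (Rabs_pos s).
    apply Rle_lt_trans with (Rabs s * (Cnorm h + 1)). nra.
    replace del with (del' * (Cnorm h + 1)) by (unfold del'; field; lra).
    apply Rmult_lt_compat_r; lra. }
  specialize (Hb k Hk).
  set (u := Csub (Csub (f (Cadd p k)) (f p)) (Cmul d k)) in *.
  replace (Cadd y (Cscal (t + s) h)) with (Cadd p k) by (unfold p, k; ceq).
  fold p.
  assert (E : Re (Cmul c (f (Cadd p k))) - Re (Cmul c (f p)) = Re (Cmul c u) + s * Re (Cmul c (Cmul d h))).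
  { unfold u, k; cunf; simpl; ring. }
  rewrite E. replace ((Re (Cmul c u) + s * Re (Cmul c (Cmul d h))) / s - Re (Cmul c (Cmul d h)))
    with (Re (Cmul c u) / s) by (field; auto).
  unfold Rdiv. rewrite Rabs_mult, Rabs_inv.
  assert (Rabs s > 0) by (apply Rabs_pos_lt; auto).
  assert (Rabs (Re (Cmul c u)) <= Cnorm c * (eps / (2 * M) * (Rabs s * Cnorm h))).
  { eapply Rle_trans; [apply Cnorm_fst|]. rewrite Cnorm_mul. apply Rmult_le_compat_l; [apply Cnorm_nonneg|].
    rewrite <- Nk; auto. }
  apply Rle_lt_trans with (Cnorm c * (eps / (2 * M) * (Rabs s * Cnorm h)) * / Rabs s).
  { apply Rmult_le_compat_r; [left; apply Rinv_0_lt_compat; lra|auto]. }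
  replace (Cnorm c * (eps / (2 * M) * (Rabs s * Cnorm h)) * / Rabs s) with
    ((Cnorm c * Cnorm h) / M * (eps / 2)) by (field; lra).
  assert ((Cnorm c * Cnorm h) / M < 1).
  { apply (Rmult_lt_reg_r M); auto. unfold Rdiv; rewrite Rmult_assoc, Rinv_l by lra. unfold M; lra. }
  assert (0 <= (Cnorm c * Cnorm h) / M).
  { apply Rmult_le_pos; [apply Rmult_le_pos; apply Cnorm_nonneg|left; apply Rinv_0_lt_compat; auto]. }
  nra.
Qed.

Lemma seg_mvt f D y h c :
  (forall t, 0 <= t <= 1 -> has_cderiv f (Cadd y (Cscal t h)) (D t)) ->
  exists t, 0 < t < 1 /\
    Re (Cmul c (Csub (f (Cadd y h)) (f y))) = Re (Cmul c (Cmul (D t) h)).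
Proof.
  intros H.
  destruct (MVT_cor2 (fun s => Re (Cmul c (f (Cadd y (Cscal s h)))))
      (fun s => Re (Cmul c (Cmul (D s) h))) 0 1 ltac:(lra)) as [t [E Ht]].
  { intros s Hs. apply line_deriv. apply H; auto. }
  exists t; split; auto.
  replace (Cadd y (Cscal 1 h)) with (Cadd y h) in E by ceq.
  replace (Cadd y (Cscal 0 h)) with y in E by ceq.
  rewrite Rminus_0_r, Rmult_1_r in E. rewrite <- E. cunf; simpl; ring.
Qed.

Lemma Cnorm_conj v : Cnorm (Cconj v) = Cnorm v.
Proof. unfold Cnorm, Cconj; simpl. f_equal. ring. Qed.

Lemma ball_seg a r x y t : Cnorm (Csub x a) < r -> Cnorm (Csub y a) < r -> 0 <= t <= 1 ->
  Cnorm (Csub (Cadd y (Cscal t (Csub x y))) a) < r.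
Proof.
  intros Hx Hy Ht.
  replace (Csub (Cadd y (Cscal t (Csub x y))) a) with
    (Cadd (Cscal (1 - t) (Csub y a)) (Cscal t (Csub x a))) by ceq.
  eapply Rle_lt_trans; [apply Cnorm_triangle|]. rewrite !Cnorm_scal.
  rewrite !Rabs_right by lra.
  destruct (Rle_lt_or_eq_dec 0 t (proj1 Ht)).
  - pose proof (Cnorm_nonneg (Csub y a)). nra.
  - subst t. nra.
Qed.

Lemma mvi f D a A r m x y :
  (forall p, has_cderiv f p (D p)) ->
  (forall p, Cnorm (Csub p a) < r -> Cnorm (Csub (D p) A) <= m) ->
  Cnorm (Csub x a) < r -> Cnorm (Csub y a) < r ->
  Cnorm (Csub (Csub (f x) (f y)) (Cmul A (Csub x y))) <= m * Cnorm (Csub x y).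
Proof.
  intros Hd HD Hx Hy.
  set (v := Csub (Csub (f x) (f y)) (Cmul A (Csub x y))).
  assert (Hm : 0 <= m).
  { specialize (HD a). replace (Csub a a) with Czero in HD by (unfold Czero; ceq).
    rewrite Cnorm_C0 in HD. pose proof (Cnorm_nonneg (Csub (D a) A)). assert (0 < r).
    { pose proof (Cnorm_nonneg (Csub x a)); lra. } specialize (HD H0); lra. }
  destruct (Rle_lt_or_eq_dec 0 (Cnorm v) (Cnorm_nonneg v)) as [Hv|Hv].
  2:{ rewrite <- Hv. pose proof (Cnorm_nonneg (Csub x y)). nra. }
  destruct (seg_mvt f (fun t => D (Cadd y (Cscal t (Csub x y)))) y (Csub x y) (Cconj v)) as [t [Ht E]].
  { intros t Ht. apply Hd. }
  replace (Cadd y (Csub x y)) with x in E by ceq.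
  set (p := Cadd y (Cscal t (Csub x y))) in *.
  assert (Hp : Cnorm (Csub p a) < r) by (apply ball_seg; auto; lra).
  assert (E2 : Cnorm v * Cnorm v = Re (Cmul (Cconj v) (Cmul (Csub (D p) A) (Csub x y)))).
  { rewrite Cnorm_sq. transitivity (Re (Cmul (Cconj v) v)). unfold Cconj; cunf; simpl; ring.
    unfold v at 2. cunf. simpl. simpl in E. unfold Cconj in *; simpl in *. nra. }
  assert (Cnorm v * Cnorm v <= Cnorm v * (m * Cnorm (Csub x y))).
  { rewrite E2. eapply Rle_trans; [apply Rle_abs|]. eapply Rle_trans; [apply Cnorm_fst|].
    rewrite !Cnorm_mul, Cnorm_conj. apply Rmult_le_compat_l; [apply Cnorm_nonneg|].
    apply Rmult_le_compat_r; [apply Cnorm_nonneg|auto]. }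
  nra.
Qed.

Lemma small_pow X C : (forall k, X <= C * (/2) ^ k) -> X <= 0.
Proof.
  intros H. destruct (Rle_or_lt X 0) as [|HX]; auto. exfalso.
  destruct (pow_lt_1_zero (/2) ltac:(rewrite Rabs_right; lra) (X / (Rabs C + 1)))
    as [N HN].
  { apply Rdiv_lt_0_compat; [lra|]. pose proof (Rabs_pos C); lra. }
  specialize (HN N (le_n N)). specialize (H N).
  assert (0 < (/2) ^ N) by (apply pow_lt; lra).
  rewrite Rabs_right in HN by lra.
  assert (C * (/2) ^ N <= Rabs C * (/2) ^ N) by (apply Rmult_le_compat_r; [lra|apply Rle_abs]).
  assert ((Rabs C + 1) * (/2) ^ N < X).
  { apply Rmult_lt_reg_r with (/ (Rabs C + 1)). apply Rinv_0_lt_compat. pose proof (Rabs_pos C); lra.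
    replace ((Rabs C + 1) * (/ 2) ^ N * / (Rabs C + 1)) with ((/2)^N) by (field; pose proof (Rabs_pos C); lra).
    exact HN. }
  nra.
Qed.

Lemma lim_le u l k c B : Un_cv u l -> (forall n, (n >= k)%nat -> Rabs (u n - c) <= B) -> Rabs (l - c) <= B.
Proof.
  intros Hu H. destruct (Rle_or_lt (Rabs (l - c)) B) as [|HB]; auto. exfalso.
  destruct (Hu (Rabs (l - c) - B) ltac:(lra)) as [N HN].
  specialize (HN (max N k) (Nat.le_max_l _ _)). specialize (H (max N k) (Nat.le_max_r _ _)).
  unfold R_dist in HN.
  pose proof (Rabs_triang (u (max N k) - c) (l - u (max N k))).
  replace (u (max N k) - c + (l - u (max N k))) with (l - c) in H0 by ring.
  rewrite Rabs_minus_sym in HN. lra.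
Qed.

Lemma local_surj f a A r w :
  0 < Cnorm A -> 0 < r ->
  (forall x y, Cnorm (Csub x a) < r -> Cnorm (Csub y a) < r ->
     Cnorm (Csub (Csub (f x) (f y)) (Cmul A (Csub x y))) <= Cnorm A / 2 * Cnorm (Csub x y)) ->
  Cnorm (Csub w (f a)) < r * Cnorm A / 8 ->
  exists x, Cnorm (Csub x a) <= 4 * (Cnorm (Csub w (f a)) / Cnorm A) /\ f x = w.
Proof.
  intros HA Hr HL Hw.
  set (al := Cnorm A) in *.
  set (Ai := Cinv A).
  assert (HAi : Cmul Ai A = Cone) by (apply Cinv_l; auto).
  assert (NAi : Cnorm Ai = / al) by (apply Cnorm_Cinv; auto).
  set (s := Cnorm (Csub w (f a)) / al).
  assert (Hs0 : 0 <= s) by (unfold s; apply Rmult_le_pos; [apply Cnorm_nonneg|left; apply Rinv_0_lt_compat; auto]).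
  assert (Hsr : s < r / 8).
  { unfold s. apply (Rmult_lt_reg_r al); auto. unfold Rdiv at 1. rewrite Rmult_assoc, Rinv_l by lra. lra. }
  set (T := fun x => Csub x (Cmul Ai (Csub (f x) w))).
  assert (HT : forall x y, Cnorm (Csub x a) < r -> Cnorm (Csub y a) < r ->
            Cnorm (Csub (T x) (T y)) <= / 2 * Cnorm (Csub x y)).
  { intros x y Hx Hy.
    replace (Csub (T x) (T y)) with
      (Csub (Cmul (Csub Cone (Cmul Ai A)) (Csub x y)) (Cmul Ai (Csub (Csub (f x) (f y)) (Cmul A (Csub x y)))))
      by (unfold T, Cone; ceq).
    rewrite HAi.
    replace (Csub (Cmul (Csub Cone Cone) (Csub x y)) (Cmul Ai (Csub (Csub (f x) (f y)) (Cmul A (Csub x y)))))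
      with (Cscal (-1) (Cmul Ai (Csub (Csub (f x) (f y)) (Cmul A (Csub x y))))) by (unfold Cone; ceq).
    rewrite Cnorm_scal, (Rabs_left (-1)) by lra. rewrite Cnorm_mul, NAi.
    specialize (HL x y Hx Hy).
    apply Rle_trans with (/ al * (al / 2 * Cnorm (Csub x y))).
    - replace (- -1) with 1 by ring. rewrite Rmult_1_l. apply Rmult_le_compat_l; auto. left; apply Rinv_0_lt_compat; auto.
    - right; field; lra. }
  set (xs := fun k => Nat.iter k T a).
  assert (xsS : forall k, xs (S k) = T (xs k)) by reflexivity.
  assert (Inv : forall k, Cnorm (Csub (xs k) a) <= 2 * s * (1 - (/2)^k) /\
                          Cnorm (Csub (xs (S k)) (xs k)) <= s * (/2)^k).
  { induction k.
    - simpl. split.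
      + replace (Csub a a) with Czero by (unfold Czero; ceq). rewrite Cnorm_C0. lra.
      + unfold T. replace (Csub (Csub a (Cmul Ai (Csub (f a) w))) a) with (Cscal (-1) (Cmul Ai (Csub (f a) w))) by ceq.
        rewrite Cnorm_scal, (Rabs_left (-1)) by lra. rewrite Cnorm_mul, NAi, Cnorm_sub_sym.
        unfold s. right. field. lra.
    - destruct IHk as [I1 I2].
      assert (0 < (/2)^k) by (apply pow_lt; lra).
      assert (J1 : Cnorm (Csub (xs (S k)) a) <= 2 * s * (1 - (/2)^(S k))).
      { eapply Rle_trans; [apply (Cnorm_sub_tri _ (xs k))|]. simpl pow. nra. }
      split; auto.
      eapply Rle_trans; [apply (HT (xs (S k)) (xs k))|].
      + assert (2 * s * (1 - (/2)^(S k)) < r). { simpl pow. nra. } lra.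
      + assert (2 * s * (1 - (/2)^k) < r) by nra. lra.
      + simpl pow. nra. }
  assert (Ball : forall k, Cnorm (Csub (xs k) a) <= 2 * s).
  { intros k. destruct (Inv k) as [I1 _]. assert (0 < (/2)^k) by (apply pow_lt; lra). nra. }
  assert (Cau : forall j k, Cnorm (Csub (xs (k + j)%nat) (xs k)) <= 2 * s * (/2)^k * (1 - (/2)^j)).
  { induction j; intros k.
    - rewrite Nat.add_0_r. replace (Csub (xs k) (xs k)) with Czero by (unfold Czero; ceq).
      rewrite Cnorm_C0. simpl. lra.
    - rewrite Nat.add_succ_r. eapply Rle_trans; [apply (Cnorm_sub_tri _ (xs (k + j)%nat))|].
      destruct (Inv (k + j)%nat) as [_ I2]. specialize (IHj k).
      rewrite pow_add in I2. simpl pow. nra. }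
  assert (Cau2 : forall k n, (n >= k)%nat -> Cnorm (Csub (xs n) (xs k)) <= 2 * s * (/2)^k).
  { intros k n Hn. replace n with (k + (n - k))%nat by lia. eapply Rle_trans; [apply Cau|].
    assert (0 < (/2)^k) by (apply pow_lt; lra). assert (0 < (/2)^(n-k)) by (apply pow_lt; lra). assert (0 <= 2 * s * (/2)^k) by nra. nra. }
  assert (CC : forall (pr : Cplx -> R), (forall z, Rabs (pr z) <= Cnorm z) ->
             (forall z1 z2, pr (Csub z1 z2) = pr z1 - pr z2) ->
             Cauchy_crit (fun n => pr (xs n))).
  { intros pr Hpr Hlin eps Heps.
    destruct (pow_lt_1_zero (/2) ltac:(rewrite Rabs_right; lra) (eps / (4 * s + 1))) as [N HN].
    { apply Rdiv_lt_0_compat; lra. }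
    exists N. intros n m Hn Hm. unfold R_dist. rewrite <- Hlin.
    eapply Rle_lt_trans; [apply Hpr|].
    eapply Rle_lt_trans; [apply (Cnorm_sub_tri _ (xs N))|].
    rewrite (Cnorm_sub_sym (xs N)).
    pose proof (Cau2 N n Hn). pose proof (Cau2 N m Hm).
    specialize (HN N (le_n N)). assert (0 < (/2)^N) by (apply pow_lt; lra).
    rewrite Rabs_right in HN by lra.
    assert (4 * s * (/2)^N < eps).
    { apply Rle_lt_trans with ((4 * s + 1) * (/2)^N). nra.
      apply Rmult_lt_reg_r with (/ (4 * s + 1)). apply Rinv_0_lt_compat; lra.
      replace ((4 * s + 1) * (/ 2) ^ N * / (4 * s + 1)) with ((/2)^N) by (field; lra). exact HN. }
    lra. }
  destruct (R_complete _ (CC fst Cnorm_fst ltac:(intros; reflexivity))) as [lu Hlu].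
  destruct (R_complete _ (CC snd Cnorm_snd ltac:(intros; reflexivity))) as [lv Hlv].
  set (xx := (lu, lv) : Cplx).
  assert (Lim : forall k, Cnorm (Csub xx (xs k)) <= 4 * s * (/2)^k).
  { intros k. eapply Rle_trans; [apply Cnorm_le_abs|]. unfold xx, Csub; simpl.
    assert (Rabs (lu - fst (xs k)) <= 2 * s * (/2)^k).
    { apply (lim_le _ _ k _ _ Hlu). intros n Hn. eapply Rle_trans; [|apply (Cau2 k n Hn)].
      apply (Cnorm_fst (Csub (xs n) (xs k))). }
    assert (Rabs (lv - snd (xs k)) <= 2 * s * (/2)^k).
    { apply (lim_le _ _ k _ _ Hlv). intros n Hn. eapply Rle_trans; [|apply (Cau2 k n Hn)].
      apply (Cnorm_snd (Csub (xs n) (xs k))). }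
    lra. }
  assert (Hxa : Cnorm (Csub xx a) <= 4 * s).
  { specialize (Lim 0%nat). simpl in Lim. rewrite Rmult_1_r in Lim. exact Lim. }
  exists xx. split; [exact Hxa|].
  assert (Hxr : Cnorm (Csub xx a) < r) by lra.
  assert (Fix : forall k, Cnorm (Csub (f xx) w) <= (4 * s * al) * (/2)^k).
  { intros k.
    assert (E : Csub (f xx) w = Cmul A (Csub xx (T xx))).
    { unfold T. replace (Cmul A (Csub xx (Csub xx (Cmul Ai (Csub (f xx) w)))))
        with (Cmul (Cmul Ai A) (Csub (f xx) w)) by ceq. rewrite HAi. unfold Cone; ceq. }
    rewrite E, Cnorm_mul. fold al.
    assert (Cnorm (Csub xx (T xx)) <= 4 * s * (/2)^k).
    { eapply Rle_trans; [apply (Cnorm_sub_tri _ (xs (S k)))|].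
      rewrite (xsS k). 
      assert (Cnorm (Csub (T (xs k)) (T xx)) <= / 2 * Cnorm (Csub (xs k) xx)).
      { apply HT; auto. specialize (Ball k). lra. }
      rewrite (Cnorm_sub_sym (xs k) xx) in H. pose proof (Lim k) as L0. pose proof (Lim (S k)) as L1.
      change (xs (S k)) with (T (xs k)) in L1. simpl pow in L1. lra. }
    assert (0 <= al) by lra. nra. }
  assert (Z : Csub (f xx) w = Czero).
  { apply Cnorm_zero. apply Rle_antisym; [|apply Cnorm_nonneg].
    apply (small_pow _ (4 * s * al)). exact Fix. }
  unfold Czero, Csub in Z. injection Z; intros Z1 Z2.
  apply injective_projections; lra.
Qed.

Lemma ift f D L W g z :
  copen L -> copen W ->
  (forall x, has_cderiv f x (D x)) -> (forall x, ccont D x) ->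
  (forall x y, L x -> L y -> f x = f y -> x = y) ->
  (forall w, W w -> L (g w) /\ f (g w) = w) ->
  W z -> 0 < Cnorm (D (g z)) ->
  has_cderiv g z (Cinv (D (g z))).
Proof.
  intros HLo HWo Hd Hc Hinj Hg Hz HA.
  destruct (Hg z Hz) as [La fa].
  set (a := g z) in *. set (A := D a) in *. set (al := Cnorm A) in *.
  set (Ai := Cinv A).
  assert (HAi : Cmul Ai A = Cone) by (apply Cinv_l; auto).
  assert (NAi : Cnorm Ai = / al) by (apply Cnorm_Cinv; auto).
  destruct (HWo z Hz) as [r0 [Hr0 HW0]].
  destruct (HLo a La) as [r1 [Hr1 HL1]].
  destruct (Hc a (al / 2) ltac:(lra)) as [r2 [Hr2 HD2]].
  set (r := Rmin r1 r2).
  assert (Hr : 0 < r) by (apply Rmin_pos; auto).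
  assert (MV : forall x y, Cnorm (Csub x a) < r -> Cnorm (Csub y a) < r ->
     Cnorm (Csub (Csub (f x) (f y)) (Cmul A (Csub x y))) <= al / 2 * Cnorm (Csub x y)).
  { intros x y Hx Hy. apply (mvi f D a A r); auto.
    intros p Hp. left. apply HD2. pose proof (Rmin_r r1 r2). fold r in H. lra. }
  set (rho := Rmin r0 (r * al / 8)).
  assert (Hrho : 0 < rho) by (apply Rmin_pos; auto; apply Rmult_lt_0_compat; [apply Rmult_lt_0_compat|]; lra).
  assert (Lip : forall w, Cnorm (Csub w z) < rho -> Cnorm (Csub (g w) a) <= 4 * (Cnorm (Csub w z) / al)).
  { intros w Hw. pose proof (Rmin_l r0 (r * al / 8)); pose proof (Rmin_r r0 (r * al / 8)).
    fold rho in H, H0.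
    assert (Ww : W w) by (apply HW0; lra).
    destruct (local_surj f a A r w HA Hr MV) as [x [Hx Hfx]].
    { rewrite fa. fold al. lra. }
    rewrite fa in Hx. fold al in Hx.
    assert (Lx : L x).
    { apply HL1. assert (4 * (Cnorm (Csub w z) / al) < r).
      { apply (Rmult_lt_reg_r al); auto. unfold Rdiv. rewrite Rmult_assoc, (Rmult_assoc _ (/ al)), Rinv_l by lra.
        assert (r * al / 8 * 4 < r * al) by (assert (0 < r * al) by (apply Rmult_lt_0_compat; lra); lra). lra. }
      pose proof (Rmin_l r1 r2). fold r in H2. lra. }
    destruct (Hg w Ww) as [Lgw fgw].
    assert (x = g w) by (apply Hinj; auto; congruence).
    subst x. exact Hx. }
  intros eps Heps.
  set (eps' := eps * al * al / 4).
  assert (Heps' : 0 < eps') by (unfold eps'; apply Rmult_lt_0_compat; [apply Rmult_lt_0_compat; [apply Rmult_lt_0_compat|]|]; lra).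
  destruct (hd_le f a A (Hd a) eps' Heps') as [d1 [Hd1 H1]].
  exists (Rmin rho (d1 * al / 4)); split.
  { apply Rmin_pos; auto. apply Rmult_lt_0_compat; [apply Rmult_lt_0_compat|]; lra. }
  intros h [Hh0 Hh]. pose proof (Rmin_l rho (d1 * al / 4)); pose proof (Rmin_r rho (d1 * al / 4)).
  set (w := Cadd z h).
  assert (Nw : Cnorm (Csub w z) = Cnorm h) by (unfold w; f_equal; ceq).
  assert (Ww : W w).
  { apply HW0. rewrite Nw. pose proof (Rmin_l r0 (r * al / 8)). fold rho in H2. lra. }
  destruct (Hg w Ww) as [Lgw fgw].
  set (k := Csub (g w) a).
  assert (Hk : Cnorm k <= 4 * (Cnorm h / al)) by (rewrite <- Nw; apply Lip; lra).
  assert (Hk2 : Cnorm k < d1).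
  { eapply Rle_lt_trans; [exact Hk|]. apply (Rmult_lt_reg_r al); auto.
    replace (4 * (Cnorm h / al) * al) with (4 * Cnorm h) by (field; lra). lra. }
  specialize (H1 k Hk2).
  assert (Efk : f (Cadd a k) = w) by (replace (Cadd a k) with (g w) by (unfold k; ceq); auto).
  assert (X : Csub (Csub (g w) a) (Cmul Ai h) =
              Cscal (-1) (Cmul Ai (Csub (Csub (f (Cadd a k)) (f a)) (Cmul A k)))).
  { rewrite Efk, fa. transitivity (Csub (Cmul (Cmul Ai A) k) (Cmul Ai h)).
    - rewrite HAi. unfold k, Cone; ceq.
    - unfold w; ceq. }
  change (Cnorm (Csub (Csub (g w) a) (Cmul Ai h)) <= eps * Cnorm h). rewrite X, Cnorm_scal, (Rabs_left (-1)) by lra. replace (- -1) with 1 by ring.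
  rewrite Rmult_1_l, Cnorm_mul, NAi.
  apply Rle_trans with (/ al * (eps' * (4 * (Cnorm h / al)))).
  { apply Rmult_le_compat_l; [left; apply Rinv_0_lt_compat; auto|].
    eapply Rle_trans; [exact H1|]. apply Rmult_le_compat_l; lra. }
  right. unfold eps'. field. lra.
Qed.

Lemma cos_half y : Rabs y <= PI / 4 -> 1/2 <= cos y.
Proof.
  intros Hy. pose proof PI_4. pose proof PI_RGT_0. apply abs_le_inv in Hy.
  destruct (cos_bound y 0 ltac:(lra) ltac:(lra)) as [Hc _].
  unfold cos_approx, cos_term in Hc. simpl in Hc.
  assert (y * y <= 1) by nra.
  replace (2 * 0 + 1)%nat with 1%nat in Hc by reflexivity. simpl in Hc. nra.
Qed.

Lemma exp1_big : 5 / 2 < exp 1.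
Proof.
  pose proof (exp_ineq1_le (/8)) as H.
  assert (E1 : exp (/4) = exp (/8) * exp (/8)) by (rewrite <- exp_plus; f_equal; field).
  assert (E2 : exp (/2) = exp (/4) * exp (/4)) by (rewrite <- exp_plus; f_equal; field).
  assert (E3 : exp 1 = exp (/2) * exp (/2)) by (rewrite <- exp_plus; f_equal; field).
  set (y := exp (/8)) in *.
  assert (y * y >= 81/64) by nra.
  assert (exp (/4) * exp (/4) >= (81/64) * (81/64)) by (rewrite E1; nra).
  assert (exp (/2) * exp (/2) >= ((81/64) * (81/64)) * ((81/64) * (81/64))) by (rewrite E2 in *; nra).
  rewrite E3. nra.
Qed.

Lemma exp_gt1 x : 0 < x -> 1 < exp x.
Proof. intros H. rewrite <- exp_0. apply exp_increasing; auto. Qed.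

Lemma Re_cexp_rot th p : Re (Cmul (Cexp (0, - th)) (Cexp p)) = exp (fst p) * cos (snd p - th).
Proof.
  unfold Cexp, Cmul, Re; simpl. rewrite exp_0. unfold Rminus. rewrite cos_plus. ring.
Qed.

Lemma main_g n (Lam V : cset) (xi : R) (g : Cplx -> Cplx) :
  copen Lam -> copen V ->
  (forall z1 z2, Lam z1 -> Lam z2 -> En n z1 = En n z2 -> z1 = z2) ->
  1 < xi -> (forall z, V z -> Re z > xi) ->
  (forall k, Lam k -> Cnorm (Dn n k) > 2) ->
  convex V -> in_horizontal_strip V (PI / 2) ->
  (forall z, V z -> Lam (g z) /\ En n (g z) = z) ->
  (forall z, V z -> has_cderiv (fun z => Cadd (Cexp z) (g z)) z (Cadd (Cexp z) (Cinv (Dn n (g z))))) /\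
  (forall z w, V z -> V w -> Cadd (Cexp z) (g z) = Cadd (Cexp w) (g w) -> z = w).
Proof.
  intros LO VO Hinj Hxi HRe HD Hconv [a0 Hstrip] Hg.
  assert (Der : forall z, V z -> has_cderiv (fun z => Cadd (Cexp z) (g z)) z (Cadd (Cexp z) (Cinv (Dn n (g z))))).
  { intros z Hz. apply cderiv_add. apply cderiv_exp.
    apply (ift (En n) (Dn n) Lam V); auto.
    - apply En_deriv.
    - apply Dn_cont.
    - destruct (Hg z Hz) as [L _]. specialize (HD _ L). lra. }
  split; auto.
  intros z w Hz Hw Heq.
  set (h := Csub w z).
  destruct (Rle_lt_or_eq_dec 0 (Cnorm h) (Cnorm_nonneg h)) as [Hh|Hh].
  2:{ symmetry in Hh. apply Cnorm_zero in Hh. unfold h, Csub, Czero in Hh. injection Hh; intros.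
      apply injective_projections; lra. }
  exfalso.
  set (th := a0 + PI / 4).
  set (E := Cexp (0, - th)).
  set (c := Cmul E (Cconj h)).
  set (F := fun z => Cadd (Cexp z) (g z)).
  set (DF := fun t => Cadd (Cexp (Cadd z (Cscal t h))) (Cinv (Dn n (g (Cadd z (Cscal t h)))))).
  destruct (seg_mvt F DF z h c) as [t [Ht Em]].
  { intros t Ht. apply Der. unfold h. apply Hconv; auto. }
  replace (Cadd z h) with w in Em by (unfold h; ceq).
  assert (L0 : Re (Cmul c (Csub (F w) (F z))) = 0).
  { unfold F. rewrite Heq. cunf; simpl; ring. }
  rewrite L0 in Em.
  assert (E2 : Re (Cmul c (Cmul (DF t) h)) = (fst h * fst h + snd h * snd h) * Re (Cmul E (DF t))).
  { unfold c, Cconj. cunf. simpl. ring. }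
  rewrite E2 in Em.
  set (p := Cadd z (Cscal t h)) in *.
  assert (Vp : V p) by (unfold p, h; apply Hconv; auto; lra).
  assert (Pos : 0 < Re (Cmul E (DF t))).
  { unfold DF. fold p.
    replace (Re (Cmul E (Cadd (Cexp p) (Cinv (Dn n (g p))))))
      with (Re (Cmul E (Cexp p)) + Re (Cmul E (Cinv (Dn n (g p))))) by (cunf; simpl; ring).
    unfold E. rewrite Re_cexp_rot. fold E.
    destruct (Hg p Vp) as [Lp _]. specialize (HD _ Lp).
    assert (Nq : Cnorm (Cmul E (Cinv (Dn n (g p)))) < 1/2).
    { rewrite Cnorm_mul. unfold E. rewrite Cnorm_Cexp. simpl. rewrite exp_0, Rmult_1_l.
      rewrite Cnorm_Cinv by lra. apply (Rmult_lt_reg_r (Cnorm (Dn n (g p)))); [lra|].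
      rewrite Rinv_l by lra. lra. }
    assert (Rq : - (1/2) < Re (Cmul E (Cinv (Dn n (g p))))).
    { pose proof (Cnorm_fst (Cmul E (Cinv (Dn n (g p))))). apply abs_le_inv in H. unfold Re. lra. }
    assert (Hc : 1/2 <= cos (snd p - th)).
    { apply cos_half. specialize (Hstrip p Vp). unfold Im in Hstrip. unfold th.
      apply Rabs_le. lra. }
    assert (He : 1 < exp (fst p)) by (apply exp_gt1; specialize (HRe p Vp); unfold Re in HRe; lra).
    nra. }
  assert (0 < fst h * fst h + snd h * snd h) by (rewrite <- Cnorm_sq; nra).
  nra.
Qed.

Theorem lemma2p1 (n : nat) (Lam V : cset) (xi : R) :
  domain Lam -> domain V ->
  conformal_iso (En n) Lam V ->
  1 < xi ->
  (forall z, V z -> Re z > xi) ->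
  (forall k d, Lam k -> has_cderiv (En n) k d -> Cnorm d > 2) ->
  convex V ->
  in_horizontal_strip V (PI / 2) ->
  conformal_iso (En (S n)) Lam (image (En (S n)) Lam) /\
  (forall k d0 d1, Lam k -> has_cderiv (En n) k d0 -> has_cderiv (En (S n)) k d1 ->
     Cnorm d1 > exp xi * Cnorm d0 - 1 /\ exp xi * Cnorm d0 - 1 > 2 * Cnorm d0) /\
  (* g is the inverse (E^n)^{-1} : V -> Lam; E^{n,n+1}(z) = e^z + g z *)
  (forall g : Cplx -> Cplx, (forall z, V z -> Lam (g z) /\ En n (g z) = z) ->
     conformal_iso (fun z => Cadd (Cexp z) (g z)) V (image (En (S n)) Lam) /\
     (forall z d, V z -> has_cderiv (fun z => Cadd (Cexp z) (g z)) z d ->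
        Cnorm d > exp xi - 1)).
Proof.
  intros [_ [LO _]] [_ [VO _]] [_ [Hinto [Hinj Hsurj]]] Hxi HRe HD0 Hconv Hstrip.
  assert (HD : forall k, Lam k -> Cnorm (Dn n k) > 2) by (intros k Hk; apply (HD0 k); auto; apply En_deriv).
  assert (ESn : forall k, En (S n) k = Cadd (Cexp (En n k)) k) by reflexivity.
  assert (PG : forall g : Cplx -> Cplx, (forall z, V z -> Lam (g z) /\ En n (g z) = z) ->
     conformal_iso (fun z => Cadd (Cexp z) (g z)) V (image (En (S n)) Lam) /\
     (forall z d, V z -> has_cderiv (fun z => Cadd (Cexp z) (g z)) z d -> Cnorm d > exp xi - 1)).
  { intros g Hg.
    destruct (main_g n Lam V xi g LO VO Hinj Hxi HRe HD Hconv Hstrip Hg) as [Der Inj].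
    split; [split; [|split; [|split]]|].
    - intros z Hz. eexists. apply Der; auto.
    - intros z Hz. destruct (Hg z Hz) as [L E]. exists (g z); split; auto. rewrite ESn, E. reflexivity.
    - exact Inj.
    - intros w [k [Lk Ek]]. exists (En n k); split; auto.
      destruct (Hg _ (Hinto k Lk)) as [L2 E2].
      assert (g (En n k) = k) by (apply Hinj; auto).
      rewrite H, <- Ek, ESn. reflexivity.
    - intros z d Hz Hd. pose proof (cderiv_unique _ _ _ _ Hd (Der z Hz)). subst d.
      destruct (Hg z Hz) as [L _]. specialize (HD _ L).
      pose proof (Cnorm_rev (Cexp z) (Cinv (Dn n (g z)))).
      rewrite Cnorm_Cexp, Cnorm_Cinv in H by lra.
      assert (/ Cnorm (Dn n (g z)) < 1/2).
      { apply (Rmult_lt_reg_r (Cnorm (Dn n (g z)))); [lra|]. rewrite Rinv_l by lra. lra. }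
      assert (exp xi < exp (fst z)) by (apply exp_increasing; apply HRe in Hz; unfold Re in Hz; lra).
      lra. }
  split; [|split]; [| |exact PG].
  -
    set (g := fun w => epsilon (inhabits Czero) (fun k => V w -> Lam k /\ En n k = w)).
    assert (Hg : forall z, V z -> Lam (g z) /\ En n (g z) = z).
    { intros z Hz. unfold g. apply (epsilon_spec (inhabits Czero) (fun k => V z -> Lam k /\ En n k = z)); auto.
      destruct (Hsurj z Hz) as [k [Lk Ek]]. exists k. auto. }
    destruct (PG g Hg) as [[_ [_ [FInj _]]] _].
    split; [|split; [|split]].
    + intros k _. eexists. apply En_deriv.
    + intros k Hk. exists k; auto.
    + intros k1 k2 Hk1 Hk2 Heq.
      assert (G : forall k, Lam k -> g (En n k) = k).
      { intros k Hk. destruct (Hg _ (Hinto k Hk)) as [L E]. apply Hinj; auto. }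
      rewrite !ESn in Heq. rewrite <- (G k1 Hk1) in Heq at 2. rewrite <- (G k2 Hk2) in Heq at 2.
      apply FInj in Heq; auto.
    + intros w Hw. exact Hw.
  -
    intros k d0 d1 Hk H0 H1.
    pose proof (cderiv_unique _ _ _ _ H0 (En_deriv n k)). subst d0.
    pose proof (cderiv_unique _ _ _ _ H1 (En_deriv (S n) k)). subst d1.
    simpl Dn. specialize (HD k Hk).
    pose proof (Cnorm_rev (Cmul (Cexp (En n k)) (Dn n k)) Cone).
    rewrite Cnorm_mul, Cnorm_Cexp, Cnorm_C1 in H.
    assert (exp xi < exp (fst (En n k))).
    { apply exp_increasing. pose proof (HRe _ (Hinto k Hk)). unfold Re in H2. lra. }
    assert (exp 1 < exp xi) by (apply exp_increasing; lra).
    pose proof exp1_big.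
    split; nra.
Qed.
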